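(* Let $P_1\subseteq P_2$ be meet semilattices with $0$ such that $P_1$ is downward closed in $P_2$. Then $P_1\subseteq P_2$ preserves finite covers and is tight; that is, the map $U\mapsto re^{-1}(U)$ identifies $\mathcal T_c(P_1)$ with an ideal of $\mathcal T_c(P_2)$, via $V^{P_1}_x\mapsto V^{P_2}_x$ for $x\in P_1$.
   Context: A meet semilattice with $0$ is a meet semilattice with least element $0$; $P_1\subseteq P_2$ means an injective meet- and $0$-preserving map identifying $P_1$ with a subset of $P_2$; downward closed means containing all elements below any of its elements. A filter of $P$ is a subset $F$ with $\emptyset\ne F\ne P$, closed upwards and under $\wedge$; $F(P)$ has the topology generated by $U_x=\{F:x\in F\}$, with basis of compact open sets $U_{(x:x_1,\dots,x_n)}=\{F:x\in F,\ x_1,\dots,x_n\notin F\}$. The tight filters $T(P)$ are the closure of the ultrafilters in $F(P)$; $V^P_{(x:x_1,\dots,x_n)}=U_{(x:x_1,\dots,x_n)}\cap T(P)$, $V^P_x=V^P_{(x:)}$. $\mathcal T_c(P)$ is the generalized Boolean algebra of compact open subsets of $T(P)$. A finite cover of $x\in P$ is a finite set of elements $\le x$ such that every $0\ne y\le x$ meets one of them nontrivially; $P_1\subseteq P_2$ preserves finite covers if every finite cover in $P_1$ of $x\in P_1$ is a finite cover of $x$ in $P_2$. In that case $re:T(P_2)\dashrightarrow T(P_1)$, $\xi\mapsto\xi\cap P_1$ (defined when nonempty), is a partial map to tight filters and $U\mapsto re^{-1}(U)$ is an injective generalized Boolean algebra morphism $\mathcal T_c(P_1)\to\mathcal T_c(P_2)$;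 $P_1\subseteq P_2$ is called tight if its image is an ideal (closed under unions and under intersection with arbitrary elements of $\mathcal T_c(P_2)$). *)

(* Defs.v *)
From HB Require Import structures.
From mathcomp Require Import all_boot all_order.
Set Implicit Arguments. Unset Strict Implicit. Unset Printing Implicit Defensive.
Import Order.Theory.
Local Open Scope order_scope.

Section TightFilters.
Variables (d : Order.disp_t) (P : bMeetSemilatticeType d).

Definition is_filter (F : P -> Prop) : Prop :=
  (exists x, F x) /\ (exists x, ~ F x) /\
  (forall x y, F x -> x <= y -> F y) /\
  (forall x y, F x -> F y -> F (x `&` y)).

Definition basicU (x : P) (xs : seq P) (F : P -> Prop) : Prop :=
  is_filter F /\ F x /\ (forall y, y \in xs -> ~ F y).

Definition is_ultrafilter (F : P -> Prop) : Prop :=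
  is_filter F /\
  forall G, is_filter G -> (forall x, F x -> G x) -> forall x, G x -> F x.

(* tight filters: closure of the ultrafilters in F(P), i.e. every basic
   open neighbourhood of F contains an ultrafilter *)
Definition is_tight (F : P -> Prop) : Prop :=
  is_filter F /\
  forall x xs, basicU x xs F -> exists G, is_ultrafilter G /\ basicU x xs G.

Definition Vb (x : P) (xs : seq P) (F : P -> Prop) : Prop :=
  is_tight F /\ basicU x xs F.
Definition V (x : P) : (P -> Prop) -> Prop := Vb x [::].

(* open subsets of T(P) (subspace topology) *)
Definition openT (U : (P -> Prop) -> Prop) : Prop :=
  (forall F, U F -> is_tight F) /\
  forall F, U F -> exists x xs, basicU x xs F /\
     forall G, is_tight G -> basicU x xs G -> U G.

Definition compactT (U : (P -> Prop) -> Prop) : Prop :=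
  forall (I : Type) (O : I -> (P -> Prop) -> Prop),
    (forall i, openT (O i)) ->
    (forall F, U F -> exists i, O i F) ->
    exists s : seq I, forall F, U F -> exists2 k, (k < size s)%N & (forall i0, O (nth i0 s k) F).

Definition Tc (U : (P -> Prop) -> Prop) : Prop := openT U /\ compactT U.

Definition fincover (x : P) (s : seq P) : Prop :=
  (forall z, z \in s -> z <= x) /\
  forall y, y != \bot -> y <= x -> exists2 z, z \in s & z `&` y != \bot.

End TightFilters.

(* P1 ⊆ P2: injective meet- and 0-preserving map *)
Definition semilattice_embedding d1 d2 (P1 : bMeetSemilatticeType d1)
  (P2 : bMeetSemilatticeType d2) (i : P1 -> P2) : Prop :=
  injective i /\ (forall x y, i (x `&` y) = i x `&` i y) /\ i \bot = \bot.

Definition downward_closed d1 d2 (P1 : bMeetSemilatticeType d1)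
  (P2 : bMeetSemilatticeType d2) (i : P1 -> P2) : Prop :=
  forall (x : P1) (y : P2), y <= i x -> exists z, i z = y.

Definition preserves_fincovers d1 d2 (P1 : bMeetSemilatticeType d1)
  (P2 : bMeetSemilatticeType d2) (i : P1 -> P2) : Prop :=
  forall (x : P1) (s : seq P1), fincover x s -> fincover (i x) (map i s).

(* the partial map re : T(P2) --> T(P1), xi |-> xi ∩ P1 (defined when nonempty) *)
Definition re d1 d2 (P1 : bMeetSemilatticeType d1)
  (P2 : bMeetSemilatticeType d2) (i : P1 -> P2) (xi : P2 -> Prop) : P1 -> Prop :=
  fun x => xi (i x).

Definition re_preimage d1 d2 (P1 : bMeetSemilatticeType d1)
  (P2 : bMeetSemilatticeType d2) (i : P1 -> P2) (U : (P1 -> Prop) -> Prop)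
  : (P2 -> Prop) -> Prop :=
  fun xi => is_tight xi /\ (exists x, xi (i x)) /\ U (re i xi).

(* Main.v *)
Require Import Defs.
From HB Require Import structures.
From mathcomp Require Import all_boot all_order.
From Stdlib Require List.
From Stdlib Require Import Classical FunctionalExtensionality PropExtensionality.
Import Order.Theory.
Local Open Scope order_scope.
Set Implicit Arguments. Unset Strict Implicit.

Definition compactL d (P : bMeetSemilatticeType d) (U : (P -> Prop) -> Prop) :=
  forall (I : Type) (O : I -> (P -> Prop) -> Prop),
    (forall i, openT (O i)) ->
    (forall F, U F -> exists i, O i F) ->
    exists s : seq I, forall F, U F -> exists i, Stdlib.Lists.List.In i s /\ O i F.



Lemma nthIn_iff (I : Type) (A : I -> Prop) (s : seq I) :
  (exists2 k, (k < size s)%N & (forall i0, A (nth i0 s k))) <-> exists i, Stdlib.Lists.List.In i s /\ A i.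
Proof.
elim: s => [|a s IH] /=.
  by split; [case | case=> ? []].
split.
  case=> [[|k]] /= Hk H; first by exists a; split; [left|apply: H].
  have: exists2 k, (k < size s)%N & (forall i0, A (nth i0 s k)) by exists k.
  by move/IH => [j [Hj Aj]]; exists j; split; [right|].
case=> j [[<-|Hj] Aj]; first by exists 0%N.
by case: (proj2 IH (ex_intro _ j (conj Hj Aj))) => k Hk H; exists k.+1.
Qed.

Lemma compactT_iff d (P : bMeetSemilatticeType d) (U : (P -> Prop) -> Prop) :
  compactT U <-> compactL U.
Proof.
split=> H I O oO cov; have [s Hs] := H I O oO cov; exists s => F UF.
  exact: (proj1 (nthIn_iff (fun i => O i F) s) (Hs F UF)).
exact: (proj2 (nthIn_iff (fun i => O i F) s) (Hs F UF)).
Qed.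

Lemma filter_bot d (P : bMeetSemilatticeType d) (F : P -> Prop) :
  is_filter F -> ~ F \bot.
Proof. by move=> [_ [[y ny] [up _]]] Fb; apply: ny; apply: up Fb (le0x y). Qed.

Lemma openT_basic d (P : bMeetSemilatticeType d) (x : P) xs :
  openT (fun F => is_tight F /\ basicU x xs F).
Proof.
split; first by move=> F [].
by move=> F [tF bF]; exists x, xs; split=> // G tG bG; split.
Qed.

Lemma openT_ext d (P : bMeetSemilatticeType d) (A B : (P -> Prop) -> Prop) :
  (forall F, A F <-> B F) -> openT A -> openT B.
Proof.
move=> E [tA oA]; split; first by move=> F /E /tA.
move=> F /E /oA [x [xs [bF H]]]; exists x, xs; split=> // G tG bG.
by apply/E; apply: H.
Qed.

Lemma compactL_ext d (P : bMeetSemilatticeType d) (A B : (P -> Prop) -> Prop) :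
  (forall F, A F <-> B F) -> compactL A -> compactL B.
Proof.
move=> E cA I O oO cov.
have [s Hs] := cA I O oO (fun F AF => cov F (proj1 (E F) AF)).
by exists s => F /E /Hs.
Qed.

Lemma compactL_union d (P : bMeetSemilatticeType d) (A B : (P -> Prop) -> Prop) :
  compactL A -> compactL B -> compactL (fun F => A F \/ B F).
Proof.
move=> cA cB I O oO cov.
have [s1 H1] := cA I O oO (fun F AF => cov F (or_introl AF)).
have [s2 H2] := cB I O oO (fun F BF => cov F (or_intror BF)).
exists (Stdlib.Lists.List.app s1 s2) => F [AF|BF].
  by have [j [jin Oj]] := H1 F AF; exists j; split=> //; apply: Stdlib.Lists.List.in_or_app; left.
by have [j [jin Oj]] := H2 F BF; exists j; split=> //; apply: Stdlib.Lists.List.in_or_app; right.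
Qed.

Lemma compactL_empty d (P : bMeetSemilatticeType d) :
  compactL (fun _ : P -> Prop => False).
Proof. by move=> I O _ _; exists [::]. Qed.

Lemma compact_basic d (P : bMeetSemilatticeType d) (K : (P -> Prop) -> Prop) x xs :
  compactL K -> (forall F, K F -> is_tight F) ->
  compactL (fun F => K F /\ is_tight F /\ basicU x xs F).
Proof.
move=> cK tK I O oO cov.
pose J := (I + option P)%type.
pose O' (j : J) : (P -> Prop) -> Prop :=
  match j with
  | inl i => O i
  | inr None => fun F => is_tight F /\ ~ F x
  | inr (Some y) => fun F => is_tight F /\ (y \in xs) /\ F y
  end.
have oO' : forall j, openT (O' j).
  case=> [i|[y|]] /=; first exact: oO.
    split; first by move=> F [].
    move=> F [tF [yin Fy]]; exists y, [::]; split; first by split; [case: tF|].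
    by move=> G tG [_ [Gy _]].
  split; first by move=> F [].
  move=> F [tF nFx]; have [[y Fy] _] := tF.1.
  exists y, [:: x]; split.
    split; [exact: tF.1 | split=> // z; rewrite inE => /eqP ->] => //.
  by move=> G tG [_ [_ H]]; split=> //; apply: H; rewrite inE eqxx.
have cov' : forall F, K F -> exists j, O' j F.
  move=> F KF; have tF := tK F KF.
  case: (classic (basicU x xs F)) => [bF|nbF].
    by have [i Oi] := cov F (conj KF (conj tF bF)); exists (inl i).
  case: (classic (F x)) => Fx; last by exists (inr None).
  have: exists y, y \in xs /\ F y.
    apply: NNPP => H; apply: nbF; split; [exact: tF.1|split=>//] => y yin Fy.
    by apply: H; exists y.
  by case=> y [yin Fy]; exists (inr (Some y)).
have [s Hs] := cK J O' oO' cov'.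
pose fix f (s : seq J) : seq I :=
  match s with [::] => [::] | inl i :: s' => i :: f s' | _ :: s' => f s' end.
exists (f s) => F [KF [tF bF]]; have [j [jin Oj]] := Hs F KF.
move: j jin Oj => [i|[y|]] jin Oj /=.
- exists i; split=> //; clear -jin.
  elim: s jin => //= a s IH [Ea|H]; first by subst a; left.
  by case: a => [a|a]; [right|]; auto.
- by case: Oj => _ [yin Fy]; case: bF => _ [_ H]; case: (H y yin).
- by case: Oj => _; case: bF => _ [].
Qed.

Lemma In_map_sval (A : Type) (Q : A -> Prop) (s : seq {a | Q a}) p :
  Stdlib.Lists.List.In p (Stdlib.Lists.List.map (@proj1_sig _ _) s) -> Q p.
Proof. by elim: s => //= a s IH [<-|H]; [exact: proj2_sig|auto]. Qed.

Lemma finite_basic d (P : bMeetSemilatticeType d) (K : (P -> Prop) -> Prop) :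
  Tc K -> exists l : seq (P * seq P),
    (forall F, K F -> exists p, Stdlib.Lists.List.In p l /\ is_tight F /\ basicU p.1 p.2 F) /\
    (forall p, Stdlib.Lists.List.In p l -> forall G, is_tight G -> basicU p.1 p.2 G -> K G).
Proof.
case=> [[tK oK] cK0]; have cK := proj1 (compactT_iff K) cK0.
pose I := {p : P * seq P | forall G, is_tight G -> basicU p.1 p.2 G -> K G}.
have [|F KF|s Hs] := cK I (fun p G => is_tight G /\ basicU (sval p).1 (sval p).2 G).
- by move=> p; exact: openT_basic.
- have [x [xs [bF H]]] := oK F KF.
  by exists (exist _ (x, xs) H); split; [apply: tK|].
exists (Stdlib.Lists.List.map (@proj1_sig _ _) s); split.
  move=> F KF; have [p [pin Op]] := Hs F KF; exists (sval p); split=> //.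
  exact: Stdlib.Lists.List.in_map.
by move=> p pin; apply: (In_map_sval pin).
Qed.

Lemma compact_inter d (P : bMeetSemilatticeType d) (K1 K2 : (P -> Prop) -> Prop) :
  Tc K1 -> Tc K2 -> compactL (fun F => K1 F /\ K2 F).
Proof.
move=> [[tK1 _] cK0] TK2; have cK1 := proj1 (compactT_iff _) cK0.
have [l [H1 H2]] := finite_basic TK2.
have Hl : forall l : seq (P * seq P), compactL (fun F => K1 F /\
    exists p, Stdlib.Lists.List.In p l /\ is_tight F /\ basicU p.1 p.2 F).
  elim=> [|p l' IH].
    by apply: (compactL_ext _ (@compactL_empty _ P)) => F; split=> // [[_ [? []]]].
  have U1 := compactL_union (@compact_basic _ _ _ p.1 p.2 cK1 tK1) IH.
  apply: (compactL_ext _ U1) => F.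
  split.
    case=> [[K [tF bF]]|[K [q [qin rest]]]]; split=> //.
      by exists p; split; [left|].
    by exists q; split; [right|].
  case=> K [q [[<-|qin] rest]]; first by left.
  by right; split=> //; exists q.
apply: (compactL_ext _ (Hl l)) => F; split.
  by case=> K [p [pin [tF bF]]]; split=> //; apply: (H2 p pin).
by case=> K /H1 H; split.
Qed.

Lemma openT_inter d (P : bMeetSemilatticeType d) (A B : (P -> Prop) -> Prop) :
  openT A -> openT B -> openT (fun F => A F /\ B F).
Proof.
move=> [tA oA] [tB oB]; split; first by move=> F [/tA].
move=> F [AF BF].
have [x [xs [[fF [Fx nx]] HA]]] := oA F AF.
have [y [ys [[_ [Fy ny]] HB]]] := oB F BF.
have fF' := fF; case: fF' => [_ [_ [up mt]]].
exists (x `&` y), (xs ++ ys); split.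
  split=> //; split; first exact: mt.
  by move=> z; rewrite mem_cat => /orP [/nx|/ny].
move=> G tG [fG [Gxy nG]]; have fG' := fG; case: fG' => [_ [_ [upG _]]].
split.
  apply: HA=> //; split=> //; split; first exact: upG Gxy (leIl _ _).
  by move=> z zin; apply: nG; rewrite mem_cat zin.
apply: HB=> //; split=> //; split; first exact: upG Gxy (leIr _ _).
by move=> z zin; apply: nG; rewrite mem_cat zin orbT.
Qed.

Lemma pred_ext (T : Type) (A B : T -> Prop) : (forall x, A x <-> B x) -> A = B.
Proof.
move=> H; apply: functional_extensionality => x.
exact: propositional_extensionality.
Qed.

Definition lift d1 d2 (P1 : bMeetSemilatticeType d1) (P2 : bMeetSemilatticeType d2)
  (i : P1 -> P2) (eta : P1 -> Prop) : P2 -> Prop :=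
  fun z => exists w, eta w /\ i w <= z.


Lemma emb_mono d1 d2 (P1 : bMeetSemilatticeType d1) (P2 : bMeetSemilatticeType d2)
  (i : P1 -> P2) : semilattice_embedding i -> forall a b, a <= b -> i a <= i b.
Proof.
case=> [inj [Hm H0]] a b /meet_idPl E; apply/meet_idPl; by rewrite -Hm E.
Qed.

Lemma emb_refl d1 d2 (P1 : bMeetSemilatticeType d1) (P2 : bMeetSemilatticeType d2)
  (i : P1 -> P2) : semilattice_embedding i -> forall a b, i a <= i b -> a <= b.
Proof.
case=> [inj [Hm H0]] a b /meet_idPl; rewrite -Hm => E; apply/meet_idPl; exact: inj E.
Qed.

Lemma filter_lift d1 d2 (P1 : bMeetSemilatticeType d1) (P2 : bMeetSemilatticeType d2)
  (i : P1 -> P2) eta : semilattice_embedding i -> is_filter eta -> is_filter (lift i eta).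
Proof.
move=> emb fe; have emb' := emb; case: emb' => [inj [Hm H0]].
have fe' := fe; case: fe' => [[w ew] [_ [up mt]]].
split; first by exists (i w), w; split.
split.
  exists \bot; case=> w' [ew' le].
  have: i w' = \bot by apply/le_anti; rewrite le le0x.
  by rewrite -H0 => /inj E; subst w'; apply: (filter_bot fe) ew'.
split.
  by move=> x y [w' [e le]] xy; exists w'; split=> //; exact: le_trans le xy.
move=> x y [a [ea la]] [b [eb lb]]; exists (a `&` b); split; first exact: mt.
by rewrite Hm; apply: leI2.
Qed.

Lemma re_lift d1 d2 (P1 : bMeetSemilatticeType d1) (P2 : bMeetSemilatticeType d2)
  (i : P1 -> P2) eta : semilattice_embedding i -> is_filter eta ->
  re i (lift i eta) = eta.
Proof.
move=> emb [_ [_ [up _]]]; apply: pred_ext => a; split.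
  by case=> w [ew le]; apply: up ew (emb_refl emb le).
by move=> ea; exists a; split.
Qed.

Lemma lift_re d1 d2 (P1 : bMeetSemilatticeType d1) (P2 : bMeetSemilatticeType d2)
  (i : P1 -> P2) xi x : semilattice_embedding i -> downward_closed i ->
  is_filter xi -> xi (i x) -> lift i (re i xi) = xi.
Proof.
move=> emb dc [_ [_ [up mt]]] xix; apply: pred_ext => z; split.
  by case=> w [xw le]; apply: up xw le.
move=> xz; have [w E] := dc x (z `&` i x) (leIr _ _).
by exists w; rewrite /re E; split; [exact: mt|exact: leIl].
Qed.

Lemma filter_re d1 d2 (P1 : bMeetSemilatticeType d1) (P2 : bMeetSemilatticeType d2)
  (i : P1 -> P2) xi x : semilattice_embedding i ->
  is_filter xi -> xi (i x) -> is_filter (re i xi).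
Proof.
move=> emb fx xix; have emb' := emb; case: emb' => [inj [Hm H0]].
have fx' := fx; case: fx' => [_ [_ [up mt]]].
split; first by exists x.
split; first by exists \bot; rewrite /re H0; exact: filter_bot.
split; first by move=> a b; rewrite /re => xa ab; apply: up xa (emb_mono emb ab).
by move=> a b; rewrite /re Hm; exact: mt.
Qed.

Lemma ultra_lift d1 d2 (P1 : bMeetSemilatticeType d1) (P2 : bMeetSemilatticeType d2)
  (i : P1 -> P2) eta : semilattice_embedding i -> downward_closed i ->
  is_ultrafilter eta -> is_ultrafilter (lift i eta).
Proof.
move=> emb dc [fe max]; split; first exact: filter_lift.
move=> H fH sub z Hz; have [w ew] := fe.1.
have Hiw : H (i w) by apply: sub; exists w; split.
have fre := filter_re emb fH Hiw.
have sub' : forall a, eta a -> re i H a by move=> a ea; apply: sub; exists a; split.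
have back := max _ fre sub'.
have [v E] := dc w (z `&` i w) (leIr _ _).
exists v; split; last by rewrite E leIl.
apply: back; rewrite /re E; case: fH => [_ [_ [_ mt]]]; exact: mt.
Qed.

Lemma ultra_re d1 d2 (P1 : bMeetSemilatticeType d1) (P2 : bMeetSemilatticeType d2)
  (i : P1 -> P2) G x : semilattice_embedding i -> downward_closed i ->
  is_ultrafilter G -> G (i x) -> is_ultrafilter (re i G).
Proof.
move=> emb dc [fG max] Gx; split; first exact: filter_re Gx.
move=> H fH sub a Ha; have fl := filter_lift emb fH.
have sub' : forall z, G z -> lift i H z.
  move=> z Gz; have [w E] := dc x (z `&` i x) (leIr _ _).
  exists w; split; last by rewrite E leIl.
  apply: sub; rewrite /re E; case: fG => [_ [_ [_ mt]]]; exact: mt.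
by apply: (max _ fl sub' (i a)); exists a; split.
Qed.

Lemma map_meet d1 d2 (P1 : bMeetSemilatticeType d1) (P2 : bMeetSemilatticeType d2)
  (i : P1 -> P2) (w : P1) (zs : seq P2) : downward_closed i ->
  exists ys : seq P1, map i ys = map (fun z => z `&` i w) zs.
Proof.
move=> dc; elim: zs => [|z zs [ys E]]; first by exists [::].
have [y Ey] := dc w (z `&` i w) (leIr _ _).
by exists (y :: ys) => /=; rewrite E Ey.
Qed.

Lemma basic_down d1 d2 (P1 : bMeetSemilatticeType d1) (P2 : bMeetSemilatticeType d2)
  (i : P1 -> P2) eta w ys z zs : semilattice_embedding i ->
  is_filter eta -> eta w -> map i ys = map (fun z => z `&` i w) zs ->
  basicU z zs (lift i eta) -> basicU w ys eta.
Proof.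
move=> emb fe ew E [_ [_ nz]]; split=> //; split=> // y yin ey.
have: i y \in map i ys by exact: map_f.
rewrite E => /mapP [z' z'in Ey]; apply: (nz z' z'in).
by exists y; split=> //; rewrite Ey leIl.
Qed.

Lemma basic_up d1 d2 (P1 : bMeetSemilatticeType d1) (P2 : bMeetSemilatticeType d2)
  (i : P1 -> P2) eta w ys z zs : semilattice_embedding i ->
  i w <= z -> map i ys = map (fun z => z `&` i w) zs ->
  basicU w ys eta -> basicU z zs (lift i eta).
Proof.
move=> emb le E [fe [ew ny]]; split; first exact: filter_lift.
split; first by exists w; split.
move=> z' z'in [g [eg lg]].
have: z' `&` i w \in map i ys by rewrite E; apply: (map_f (fun z => z `&` i w)).
case/mapP=> y yin Ey; apply: (ny y yin).
have: g `&` w <= y.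
  apply: (emb_refl emb); rewrite -Ey; case: emb => [_ [Hm _]]; rewrite Hm.
  exact: leI2.
case: fe => [_ [_ [up mt]]]; apply: up; exact: mt.
Qed.

Lemma tight_lift d1 d2 (P1 : bMeetSemilatticeType d1) (P2 : bMeetSemilatticeType d2)
  (i : P1 -> P2) eta : semilattice_embedding i -> downward_closed i ->
  is_tight eta -> is_tight (lift i eta).
Proof.
move=> emb dc [fe T]; split; first exact: filter_lift.
move=> z zs bl; have [w [ew le]] := bl.2.1.
have [ys E] := map_meet w zs dc.
have b1 := basic_down emb fe ew E bl.
have [G [uG bG]] := T _ _ b1.
exists (lift i G); split; [exact: ultra_lift|exact: basic_up emb le E bG].
Qed.

Lemma tight_re d1 d2 (P1 : bMeetSemilatticeType d1) (P2 : bMeetSemilatticeType d2)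
  (i : P1 -> P2) xi x : semilattice_embedding i -> downward_closed i ->
  is_tight xi -> xi (i x) -> is_tight (re i xi).
Proof.
move=> emb dc [fx T] xix; split; first exact: filter_re xix.
move=> a as_ [_ [ea na]].
have: basicU (i a) (map i as_) xi.
  by split=> //; split=> // y /mapP [b bin ->]; exact: na.
case/T => G [uG [_ [Ga nG]]].
exists (re i G); split; first exact: ultra_re uG Ga.
split; first exact: filter_re uG.1 Ga.
split=> // b bin; apply: nG; exact: map_f.
Qed.

Lemma open_push d1 d2 (P1 : bMeetSemilatticeType d1) (P2 : bMeetSemilatticeType d2)
  (i : P1 -> P2) O2 : semilattice_embedding i -> downward_closed i ->
  openT O2 -> openT (fun eta => is_tight eta /\ O2 (lift i eta)).
Proof.
move=> emb dc [tO oO]; split; first by move=> F [].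
move=> eta [te Oe]; have [z [zs [bl H]]] := oO _ Oe.
have [w [ew le]] := bl.2.1.
have [ys E] := map_meet w zs dc.
exists w, ys; split; first exact: basic_down emb te.1 ew E bl.
move=> G tG bG; split=> //; apply: H; first exact: tight_lift.
exact: basic_up emb le E bG.
Qed.

Lemma open_pull d1 d2 (P1 : bMeetSemilatticeType d1) (P2 : bMeetSemilatticeType d2)
  (i : P1 -> P2) O1 : semilattice_embedding i -> downward_closed i ->
  openT O1 -> openT (fun xi => is_tight xi /\ (exists x, xi (i x)) /\ O1 (re i xi)).
Proof.
move=> emb dc [tO oO]; split; first by move=> F [].
move=> xi [tx [[x0 Hx0] Ox]].
have [x [xs [[_ [rx nx]] H]]] := oO _ Ox.
exists (i x), (map i xs); split.
  by split; [exact: tx.1|split=> // y /mapP [b bin ->]; exact: nx].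
move=> G tG [fG [Gx nG]]; split=> //; split; first by exists x.
apply: H; first exact: tight_re Gx.
split; first exact: filter_re Gx.
split=> // b bin; apply: nG; exact: map_f.
Qed.

Lemma compact_image d1 d2 (P1 : bMeetSemilatticeType d1) (P2 : bMeetSemilatticeType d2)
  (i : P1 -> P2) K : semilattice_embedding i -> downward_closed i ->
  compactL K -> (forall xi, K xi -> is_tight xi /\ exists x, xi (i x)) ->
  compactL (fun eta => is_tight eta /\ K (lift i eta)).
Proof.
move=> emb dc cK HK I O oO cov.
pose O' j := fun xi => is_tight xi /\ (exists x, xi (i x)) /\ O j (re i xi).
have oO' : forall j, openT (O' j) by move=> j; apply: open_pull.
have cov' : forall xi, K xi -> exists j, O' j xi.
  move=> xi Kxi; have [tx [x xix]] := HK xi Kxi.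
  have tr := tight_re emb dc tx xix.
  have [j Oj] := cov (re i xi) (conj tr (eq_ind_r K Kxi (lift_re emb dc tx.1 xix))).
  by exists j; split=> //; split=> //; exists x.
have [s Hs] := cK I O' oO' cov'.
exists s => eta [te Kl]; have [j [jin [_ [_ Oj]]]] := Hs _ Kl.
by exists j; split=> //; rewrite -(re_lift emb te.1).
Qed.

Unset Implicit Arguments.

Theorem mainTheorem10 (d1 d2 : Order.disp_t)
  (P1 : bMeetSemilatticeType d1) (P2 : bMeetSemilatticeType d2) (i : P1 -> P2) :
  semilattice_embedding i -> downward_closed i ->
  preserves_fincovers i /\
      (forall xi, is_tight xi -> (exists x, xi (i x)) -> is_tight (re i xi)) /\
      (forall U, Tc U -> Tc (re_preimage i U)) /\
      (forall U U', Tc U -> Tc U' -> re_preimage i U = re_preimage i U' -> U = U') /\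
      (forall U U', Tc U -> Tc U' -> exists2 W, Tc W &
          re_preimage i W = (fun xi => re_preimage i U xi \/ re_preimage i U' xi)) /\
      (forall U W, Tc U -> Tc W -> exists2 U', Tc U' &
          re_preimage i U' = (fun xi => re_preimage i U xi /\ W xi)) /\
      (forall x : P1, re_preimage i (V x) = V (i x)).
Proof.
move=> emb dc; have emb' := emb; case: emb' => [inj [Hm H0]].
have item3 : forall U, Tc U -> Tc (re_preimage i U).
  move=> U [oU cU]; split; first exact: open_pull.
  apply/compactT_iff; have cU' := proj1 (compactT_iff U) cU.
  move=> I O oO cov.
  pose O'' j := fun eta => is_tight eta /\ O j (lift i eta).
  have oO'' : forall j, openT (O'' j) by move=> j; apply: open_push.
  have cov'' : forall eta, U eta -> exists j, O'' j eta.
    move=> eta Ue; have te := oU.1 eta Ue; have [w ew] := te.1.1.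
    have: re_preimage i U (lift i eta).
      split; first exact: tight_lift.
      split; first by exists w, w; split.
      by rewrite re_lift //; exact: te.1.
    by case/cov => j Oj; exists j.
  have [s Hs] := cU' I O'' oO'' cov''.
  exists s => xi [tx [[x xix] Ux]]; have [j [jin [_ Oj]]] := Hs _ Ux.
  by exists j; split=> //; rewrite -(lift_re emb dc tx.1 xix).
split.
  move=> x s [sx cv]; split.
    by move=> z /mapP [a ain ->]; apply: (emb_mono emb); exact: sx.
  move=> y ny yx; have [b Eb] := dc x y yx; subst y.
  have nb : b != \bot by apply: contra ny => /eqP ->; rewrite H0.
  have [a ain ab] := cv b nb (emb_refl emb yx).
  exists (i a); first exact: map_f.
  by rewrite -Hm; apply: contra ab => /eqP; rewrite -H0 => /inj ->.
split; first by move=> xi tx [x xix]; exact: tight_re xix.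
split; first exact: item3.
split.
  move=> U U' [[tU _] _] [[tU' _] _] E.
  have key : forall (A B : (P1 -> Prop) -> Prop), (forall F, A F -> is_tight F) ->
      re_preimage i A = re_preimage i B -> forall eta, A eta -> B eta.
    move=> A B tA EAB eta Ae; have te := tA eta Ae; have [w ew] := te.1.1.
    have: re_preimage i A (lift i eta).
      split; first exact: tight_lift.
      split; first by exists w, w; split.
      by rewrite re_lift //; exact: te.1.
    by rewrite EAB => [[_ [_]]]; rewrite re_lift //; exact: te.1.
  apply: pred_ext => eta; split; [exact: (key U U' tU E)|exact: (key U' U tU' (esym E))].
split.
  move=> U U' [oU cU] [oU' cU']; exists (fun F => U F \/ U' F).
    split.
      case: oU => tU oU; case: oU' => tU' oU'; split; first by move=> F [/tU|/tU'].
      move=> F [/oU|/oU'] [x [xs [bF H]]]; exists x, xs; split=> // G tG bG;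
        [left|right]; exact: H.
    apply/compactT_iff; apply: compactL_union; exact/compactT_iff.
  apply: pred_ext => xi; rewrite /re_preimage; tauto.
split.
  move=> U W TU TW; exists (fun eta => U eta /\ W (lift i eta)).
    have [oU cU] := TU; have [oW cW] := TW; split.
      apply: (openT_ext _ (openT_inter oU (open_push emb dc oW))).
      by move=> F; split=> [[? [_ ?]]|[UF ?]]; split=> //; split=> //; apply: oU.1.
    apply/compactT_iff.
    have cK := compact_inter (item3 U TU) TW.
    have := compact_image emb dc cK (fun xi H => conj H.1.1 H.1.2.1).
    apply: compactL_ext => eta; split.
      case=> te [[_ [_ Ue]] Wl]; split=> //; by rewrite re_lift in Ue; last exact: te.1.
    case=> Ue Wl; have te := oU.1 eta Ue; have [w ew] := te.1.1; split=> //.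
    split=> //; split; first exact: tight_lift.
    split; first by exists w, w; split.
    by rewrite re_lift //; exact: te.1.
  apply: pred_ext => xi; rewrite /re_preimage; split.
    case=> tx [[x xix] [Ur Wl]]; rewrite (lift_re emb dc tx.1 xix) in Wl.
    by split=> //; split=> //; split=> //; exists x.
  case=> [[tx [[x xix] Ur]] Wx]; split=> //; split; first by exists x.
  by split=> //; rewrite (lift_re emb dc tx.1 xix).
move=> x; apply: pred_ext => xi; split.
  by case=> tx [_ [_ [_ [rx _]]]]; split=> //; split; [exact: tx.1|split].
case=> tx [fx [xix _]]; split=> //; split; first by exists x.
split; first exact: tight_re xix.
by split; [exact: filter_re xix|split].
Qed.
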